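(* Let $X_1,\dots,X_n$ be i.i.d. copies of $X$ and $Y_1,\dots,Y_m$ be i.i.d. copies of $Y$. Let $\tau_{k|n}(\mathbf X)$ denote the lifetime of the $k$-out-of-$n$ system with component lifetimes $X_1,\dots,X_n$ and $\tau_{l|m}(\mathbf Y)$ the lifetime of the $l$-out-of-$m$ system with component lifetimes $Y_1,\dots,Y_m$. If $X\underset{c}{\prec}Y$ and $Y\le_{rhr}X$, then $\tau_{k|n}(\mathbf X)\underset{c}{\prec}\tau_{l|m}(\mathbf Y)$ for all $1\le k\le n$, $1\le l\le m$ with $k\le l$ and $m-l\le n-k$.
   Context: All random variables are non-negative and absolutely continuous with support $[0,\infty)$. For a random variable $W$: density $f_W$, cdf $F_W$, survival $\bar F_W=1-F_W$, hazard rate $r_W=f_W/\bar F_W$. $X\le_{rhr}Y$ means $F_Y(x)/F_X(x)$ is increasing in $x$. $X\underset{c}{\prec}Y$ means $r_X(x)/r_Y(x)$ is increasing in $x\ge0$. A $k$-out-of-$n$ system functions as long as at least $k$ of its $n$ components function. ''Increasing'' means non-decreasing. *)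

(* Defs.v *)
From HB Require Import structures.
From mathcomp Require Import all_boot all_order all_algebra.
From mathcomp Require Import all_classical all_reals all_analysis.
Set Implicit Arguments. Unset Strict Implicit. Unset Printing Implicit Defensive.
Import Order.TTheory GRing.Theory Num.Theory.
Import numFieldNormedType.Exports.
Local Open Scope classical_set_scope.
Local Open Scope ring_scope.

Section Lifetimes.
Variable R : realType.
Local Notation mu := (@lebesgue_measure R).

Definition lifetime_density (f : R -> R) : Prop :=
  measurable_fun setT f /\
  (forall x, 0 <= f x) /\
  (forall x, x < 0 -> f x = 0) /\
  mu.-integrable setT (EFin \o f) /\
  (\int[mu]_x (f x)%:E = 1)%E /\
  (forall a b, 0 <= a -> a < b -> (0 < \int[mu]_(x in `[a, b]) (f x)%:E)%E).

Definition cdf (f : R -> R) (x : R) : R :=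
  fine (\int[mu]_(t in `]-oo, x]) (f t)%:E)%E.

Definition surv (f : R -> R) (x : R) : R := 1 - cdf f x.

Definition hazard (g G : R -> R) (x : R) : R := g x / (1 - G x).

Definition rhr_le (fX fY : R -> R) : Prop :=
  forall x y, x <= y -> cdf fY x / cdf fX x <= cdf fY y / cdf fX y.

Definition c_ord_hazard (rX rY : R -> R) : Prop :=
  forall x y, 0 <= x -> x <= y -> rX x / rY x <= rX y / rY y.

Definition c_ord (fX fY : R -> R) : Prop :=
  c_ord_hazard (hazard fX (cdf fX)) (hazard fY (cdf fY)).

(* Lifetime of a k-out-of-n system with i.i.d. components of density f:
   the system has failed by time x iff at least n-k+1 components have failed,
   so its cdf is  sum_{j=n-k+1}^{n} C(n,j) F^j (1-F)^(n-j)  and its density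
   (the density of the (n-k+1)-th order statistic) is
   n C(n-1,k-1) F^(n-k) (1-F)^(k-1) f. *)
Definition sys_cdf (k n : nat) (f : R -> R) (x : R) : R :=
  \sum_(j < n.+1 | (n - k < j)%N)
     'C(n, j)%:R * cdf f x ^+ j * (1 - cdf f x) ^+ (n - j).

Definition sys_density (k n : nat) (f : R -> R) (x : R) : R :=
  (n * 'C(n.-1, k.-1))%:R * cdf f x ^+ (n - k) * (1 - cdf f x) ^+ k.-1 * f x.

Definition sys_hazard (k n : nat) (f : R -> R) : R -> R :=
  hazard (sys_density k n f) (sys_cdf k n f).

End Lifetimes.

(* Main.v *)
Require Import Defs.
From HB Require Import structures.
From mathcomp Require Import all_boot all_order all_algebra.
From mathcomp Require Import all_classical all_reals all_analysis measurable_realfun lebesgue_integral.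
Import Order.TTheory GRing.Theory Num.Theory.
Import numFieldNormedType.Exports.
Local Open Scope classical_set_scope.
Local Open Scope ring_scope.
Local Notation cdf := Defs.cdf.
From mathcomp Require Import ring lra zify.
Set Implicit Arguments. Unset Strict Implicit. Unset Printing Implicit Defensive.
Section An.
Variable R : realType.
Local Notation mu := (@lebesgue_measure R).
Variable f : R -> R.
Hypothesis hf : lifetime_density f.

Lemma mEf : measurable_fun [set: R] (EFin \o f).
Proof. by case: hf => mf _; exact/measurable_EFinP. Qed.

Lemma f0 x : 0 <= f x.
Proof. by case: hf => _ [h _]. Qed.

Lemma int_le1 (A : set R) : measurable A -> (\int[mu]_(x in A) (f x)%:E <= 1)%E.
Proof.
move=> mA; case: hf => _ [_ [_ [_ [h1 _]]]]; rewrite -h1.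
apply: ge0_subset_integral => //; first exact: mEf.
by move=> x _; rewrite lee_fin f0.
Qed.

Lemma cdfE x : (cdf f x)%:E = (\int[mu]_(t in `]-oo, x]) (f t)%:E)%E.
Proof.
rewrite /cdf fineK // ge0_fin_numE; last by apply: integral_ge0 => t _; rewrite lee_fin f0.
by rewrite (le_lt_trans (int_le1 _)) ?ltry.
Qed.

Lemma cdf_ge0 x : 0 <= cdf f x.
Proof. by rewrite -lee_fin cdfE; apply: integral_ge0 => t _; rewrite lee_fin f0. Qed.

Lemma cdf_le1 x : cdf f x <= 1.
Proof. by rewrite -lee_fin cdfE; apply: int_le1. Qed.

Lemma cdf_mono x y : x <= y -> cdf f x <= cdf f y.
Proof.
move=> xy; rewrite -lee_fin !cdfE; apply: ge0_subset_integral => //.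
- exact: measurable_funS mEf.
- by move=> t _; rewrite lee_fin f0.
- by move=> t /=; rewrite !in_itv /= => /le_trans; apply.
Qed.

Lemma cdf_to1 c : c < 1 -> exists n : nat, c < cdf f n%:R.
Proof.
move=> c1; apply/not_existsP => H.
have Hn n : cdf f n%:R <= c by rewrite leNgt; apply/negP => /(H n).
pose g' := fun n : nat => (EFin \o f) \_ `]-oo, n%:R].
have mg : forall n, measurable_fun setT (g' n).
  move=> n; apply/(measurable_restrictT _ _).1 => //.
  exact: measurable_funS mEf.
have g0 : forall n x, setT x -> (0 <= g' n x)%E.
  by move=> n x _; rewrite /g' patchE; case: ifP => _ //; rewrite lee_fin f0.
have nd : forall x, setT x -> {homo g'^~ x : n m / (n <= m)%N >-> (n <= m)%E}.
  move=> x _ n m nm; rewrite /g' !patchE.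
  case: ifPn => xn; case: ifPn => xm //; rewrite ?lee_fin ?f0 //.
  exfalso; move/negP: xm; apply; apply/mem_set; move/set_mem: xn.
  rewrite /= !in_itv /= => /le_trans; apply; by rewrite ler_nat.
have := @cvg_monotone_convergence _ _ _ mu _ measurableT _ mg g0 nd.
have -> : (fun x => limn (g'^~ x)) = EFin \o f.
  apply/funext => x; apply: lim_near_cst => //.
  near=> n.
  rewrite /g' patchE ifT //; apply/mem_set; rewrite /= in_itv /=.
  near: n; exact: nbhs_infty_ger.
move=> Hc; have lim1 := cvg_lim _ Hc.
have : (limn (fun n => \int[mu]_(x in setT) g' n x) <= c%:E)%E.
  apply: lime_le; first by apply/cvg_ex; eexists; exact: Hc.
  apply: nearW => n; rewrite /g' -integral_mkcond -cdfE lee_fin; exact: Hn.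
rewrite lim1 //.
case: hf => _ [_ [_ [_ [h1 _]]]]; rewrite h1 lee_fin => /(lt_le_trans c1).
by rewrite ltxx.
Unshelve. all: by end_near. Qed.
End An.
Section Alg.
Variable R : realType.

Definition Tp (k' a : nat) (u : R) : R :=
  \sum_(j < a.+1) ('C(k' + j, j))%:R * u ^+ j.

Definition Lp (K a : nat) (p q : R) : R :=
  \sum_(j < a.+1) ('C(K + a, j))%:R * p ^+ j * q ^+ (K + a - j).

Lemma Lp_rec K a p q : p + q = 1 ->
  Lp K a.+1 p q = Lp K a p q + ('C(K + a, a.+1))%:R * p ^+ a.+1 * q ^+ K.
Proof.
move=> pq.
rewrite /Lp big_ord_recl /=.
under eq_bigr => j _ do rewrite /bump /= addnS binS subSS natrD !mulrDl.
rewrite big_split /=.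
have E1 : \sum_(i < a.+1) 'C(K + a, i)%:R * p ^+ (1 + i) * q ^+ (K + a - i)
          = p * Lp K a p q.
  rewrite /Lp mulr_sumr; apply: eq_bigr => i _.
  by rewrite add1n exprS; ring.
rewrite E1.
have E2 : q * Lp K a p q = q ^+ (K + a).+1 +
   \sum_(i < a) 'C(K + a, i.+1)%:R * p ^+ i.+1 * q ^+ (K + a - i).
  rewrite /Lp big_ord_recl mulrDr bin0 mul1r expr0 mul1r subn0 -exprS; congr (_ + _).
  rewrite mulr_sumr; apply: eq_bigr => i _ /=; rewrite /bump /=.
  have iN : (i < K + a)%N by have := ltn_ord i; lia.
  rewrite add1n -[in RHS](subnSK iN) (exprS q); ring.
have E3 : \sum_(i < a.+1) 'C(K + a, i.+1)%:R * p ^+ (1 + i) * q ^+ (K + a - i)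
   = \sum_(i < a) 'C(K + a, i.+1)%:R * p ^+ i.+1 * q ^+ (K + a - i)
     + 'C(K + a, a.+1)%:R * p ^+ a.+1 * q ^+ K.
  rewrite big_ord_recr /= add1n; congr (_ + _).
  by rewrite addnK.
rewrite E3 bin0 mul1r expr0 mul1r subn0 addnS.
have HL : Lp K a p q = p * Lp K a p q + q * Lp K a p q by rewrite -mulrDl pq mul1r.
rewrite -/(Lp K a p q) [in RHS]HL E2.
ring.
Qed.
End Alg.
Section Alg2.
Variable R : realType.

Lemma Lp_T k' a (p q : R) : p + q = 1 -> Lp k'.+1 a p q = q ^+ k'.+1 * Tp k' a p.
Proof.
move=> pq; elim: a => [|a IH].
  by rewrite /Lp /Tp !big_ord1 /= !bin0 addn0 subn0 !mul1r expr0 mulr1.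
rewrite Lp_rec // IH /Tp [in RHS]big_ord_recr /= mulrDr; congr (_ + _).
by rewrite addSnnS; ring.
Qed.

Lemma surv_id k' a (p : R) :
  1 - \sum_(j < (k'.+1 + a).+1 | (k'.+1 + a - k'.+1 < j)%N)
        'C(k'.+1 + a, j)%:R * p ^+ j * (1 - p) ^+ (k'.+1 + a - j)
  = (1 - p) ^+ k'.+1 * Tp k' a p.
Proof.
rewrite -Lp_T; last by rewrite addrC subrK.
have tot : \sum_(j < (k'.+1 + a).+1)
        'C(k'.+1 + a, j)%:R * p ^+ j * (1 - p) ^+ (k'.+1 + a - j) = 1.
  have := exprDn (1 - p) p (k'.+1 + a); rewrite subrK expr1n => E; rewrite [RHS]E.
  by apply: eq_bigr => i _; rewrite -[RHS]mulr_natl; ring.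
rewrite -[X in X - _]tot (bigID (fun j : 'I__ => (k'.+1 + a - k'.+1 < j)%N)) /=.
rewrite addrC addrK addKn.
have le : (a.+1 <= (k'.+1 + a).+1)%N by lia.
rewrite (eq_bigl (fun i : 'I__ => (i < a.+1)%N)); last first.
  by move=> i /=; rewrite -leqNgt.
rewrite /Lp; symmetry; exact: (big_ord_widen _ (fun j => 'C(k'.+1 + a, j)%:R * p ^+ j * (1 - p) ^+ (k'.+1 + a - j)) le).
Qed.
End Alg2.
Section Alg3.
Variable R : realType.

Lemma div_le (a b c d : R) : 0 < b -> 0 < d -> a * d <= c * b -> a / b <= c / d.
Proof.
move=> b0 d0 h; rewrite ler_pdivrMr // mulrAC ler_pdivlMr //.
Qed.

Lemma pow_cross (x y : R) i j : 0 <= x -> x <= y -> (i <= j)%N ->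
  y ^+ i * x ^+ j <= x ^+ i * y ^+ j.
Proof.
move=> x0 xy ij; rewrite -(subnKC ij) !exprD.
have y0 : 0 <= y by apply: le_trans xy.
have -> : y ^+ i * (x ^+ i * x ^+ (j - i)) = (x ^+ i * y ^+ i) * x ^+ (j - i) by ring.
have -> : x ^+ i * (y ^+ i * y ^+ (j - i)) = (x ^+ i * y ^+ i) * y ^+ (j - i) by ring.
apply: ler_wpM2l.
  by rewrite mulr_ge0 // exprn_ge0.
by apply: lerXn2r => //; rewrite nnegrE.
Qed.

Lemma ratio_mono (M : nat) (nn dd : nat -> R) (x y : R) :
  0 <= x -> x <= y ->
  (forall i j, (i <= j)%N -> (j < M)%N -> nn i * dd j <= nn j * dd i) ->
  (\sum_(i < M) nn i * x ^+ i) * (\sum_(j < M) dd j * y ^+ j) <=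
  (\sum_(i < M) nn i * y ^+ i) * (\sum_(j < M) dd j * x ^+ j).
Proof.
move=> x0 xy H; rewrite -subr_ge0.
set t := fun i j : 'I_M => nn i * dd j * (y ^+ i * x ^+ j - x ^+ i * y ^+ j).
have E : (\sum_(i < M) nn i * y ^+ i) * (\sum_(j < M) dd j * x ^+ j) -
  (\sum_(i < M) nn i * x ^+ i) * (\sum_(j < M) dd j * y ^+ j) =
  \sum_(i < M) \sum_(j < M) t i j.
  rewrite !big_distrlr /= -sumrB; apply: eq_bigr => i _.
  rewrite -sumrB; apply: eq_bigr => j _; rewrite /t; ring.
have E2 : \sum_(i < M) \sum_(j < M) t i j = \sum_(i < M) \sum_(j < M) t j i.
  by rewrite exchange_big.
have E3 : 2%:R * \sum_(i < M) \sum_(j < M) t i j =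
   \sum_(i < M) \sum_(j < M) (t i j + t j i).
  rewrite mulr_natl mulr2n {2}E2 -big_split /=; apply: eq_bigr => i _.
  by rewrite -big_split.
rewrite E -(pmulr_rge0 _ (_ : 0 < 2%:R)) // E3.
apply: sumr_ge0 => i _; apply: sumr_ge0 => j _; rewrite /t.
have -> : nn i * dd j * (y ^+ i * x ^+ j - x ^+ i * y ^+ j) +
   nn j * dd i * (y ^+ j * x ^+ i - x ^+ j * y ^+ i) =
   (nn j * dd i - nn i * dd j) * (x ^+ i * y ^+ j - y ^+ i * x ^+ j) by ring.
case: (leqP i j) => ij.
  apply: mulr_ge0; rewrite subr_ge0.
    exact: H.
  exact: pow_cross.
apply: mulr_le0; rewrite subr_le0.
  by apply: H => //; apply: ltnW.
rewrite mulrC [y ^+ i * _]mulrC; apply: pow_cross => //; exact: ltnW.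
Qed.
End Alg3.
Lemma bin_cons k' l' c t : (k' <= l')%N ->
  ('C(l' + t, t) * 'C(k' + (c + t.+1), c + t.+1) <=
   'C(l' + t.+1, t.+1) * 'C(k' + (c + t), c + t))%N.
Proof.
move=> kl.
have h1 := mul_bin_diag (l' + t.+1) t.
have h2 := mul_bin_diag (k' + (c + t.+1)) (c + t).
rewrite addnS /= in h1; rewrite !addnS /= in h2.
rewrite !addnS.
set A := 'C(l' + t, t) in h1 *; set A' := 'C((l' + t).+1, t.+1) in h1 *.
set B := 'C(k' + (c + t), c + t) in h2 *; set B' := 'C((k' + (c + t)).+1, (c + t).+1) in h2 *.
rewrite -(@leq_pmul2r (t.+1 * (c + t).+1)) //.
have -> : (A * B' * (t.+1 * (c + t).+1) = A * B * (t.+1 * (k' + (c + t)).+1))%N.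
  transitivity (A * t.+1 * ((c + t).+1 * B'))%N; first ring.
  by rewrite -h2; ring.
have -> : (A' * B * (t.+1 * (c + t).+1) = A * B * ((l' + t).+1 * (c + t).+1))%N.
  transitivity (B * (c + t).+1 * (t.+1 * A'))%N; first ring.
  by rewrite -h1; ring.
apply: leq_mul => //; nia.
Qed.

Lemma bin_ratio k' l' c s d : (k' <= l')%N ->
 ('C(l' + s, s) * 'C(k' + (c + (s + d)), c + (s + d)) <=
  'C(l' + (s + d), s + d) * 'C(k' + (c + s), c + s))%N.
Proof.
move=> kl; elim: d => [|d IH]; first by rewrite addn0 mulnC.
have hc := bin_cons c (s + d) kl.
rewrite addnS.
set X0 := 'C(l' + s, s) in IH *; set Y0 := 'C(k' + (c + s), c + s) in IH *.
set Xt := 'C(l' + (s + d), s + d) in IH hc *.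
set Yt := 'C(k' + (c + (s + d)), c + (s + d)) in IH hc *.
set X1 := 'C(l' + (s + d).+1, (s + d).+1) in hc *.
set Y1 := 'C(k' + (c + (s + d).+1), c + (s + d).+1) in hc *.
have Xp : (0 < Xt)%N by rewrite bin_gt0 leq_addl.
have Yp : (0 < Yt)%N by rewrite bin_gt0 leq_addl.
rewrite -(@leq_pmul2r (Xt * Yt)) ?muln_gt0 ?Xp ?Yp //.
have e1 : (X0 * Y1 * (Xt * Yt) = (X0 * Yt) * (Xt * Y1))%N by ring.
have e2 : (X1 * Y0 * (Xt * Yt) = (Xt * Y0) * (X1 * Yt))%N by ring.
rewrite e1 e2; apply: leq_mul => //.

Qed.
Section Alg5.
Variable R : realType.

Lemma Tp_ge1 k' a (u : R) : 0 <= u -> 1 <= Tp k' a u.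
Proof.
move=> u0; rewrite /Tp big_ord_recl /= addn0 bin0 expr0 mulr1 lerDl.
by apply: sumr_ge0 => i _; rewrite mulr_ge0 ?exprn_ge0.
Qed.

Lemma Tp_gt0 k' a (u : R) : 0 <= u -> 0 < Tp k' a u.
Proof. by move=> u0; apply: lt_le_trans (Tp_ge1 _ _ u0). Qed.

Lemma Tp0 k' (u : R) : Tp k' 0 u = 1.
Proof. by rewrite /Tp big_ord1 /= addn0 bin0 expr0 mulr1. Qed.

Lemma sum_single a (x : R) : \sum_(i < a.+1) (i == a :> nat)%:R * x ^+ i = x ^+ a.
Proof.
rewrite big_ord_recr /= eqxx mul1r big1 ?add0r // => i _.
by rewrite /= (ltn_eqF (ltn_ord i)) mul0r.
Qed.

Lemma Fmono k' a (F1 F2 : R) : 0 <= F1 -> F1 <= F2 ->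
  F1 ^+ a / Tp k' a F1 <= F2 ^+ a / Tp k' a F2.
Proof.
move=> F10 F12; have F20 : 0 <= F2 by apply: le_trans F12.
apply: div_le; try exact: Tp_gt0.
have := @ratio_mono R a.+1 (fun i => (i == a :> nat)%:R) (fun j => 'C(k' + j, j)%:R) F1 F2 F10 F12.
rewrite !sum_single; apply.
move=> i j ij ja; case: (eqVneq i a) => [ia|ia].
  have -> : j = a by apply/eqP; rewrite eqn_leq -ltnS ja -ia ij.
  rewrite eqxx ia; exact: lexx.
by rewrite mul0r mulr_ge0.
Qed.

Definition nnc (l' c : nat) (j : nat) : R :=
  if (c <= j)%N then 'C(l' + (j - c), j - c)%:R else 0.

Lemma sum_shift l' c b (x : R) :
  \sum_(j < (c + b).+1) nnc l' c j * x ^+ j = x ^+ c * Tp l' b x.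
Proof.
rewrite -addnS big_split_ord /= big1 ?add0r; last first.
  by move=> i _; rewrite /nnc /= leqNgt ltn_ord mul0r.
rewrite /Tp mulr_sumr; apply: eq_bigr => i _ /=.
by rewrite /nnc leq_addr addKn exprD; ring.
Qed.

Lemma nnc_ge0 l' c j : 0 <= nnc l' c j.
Proof. by rewrite /nnc; case: ifP. Qed.

Lemma step1 k' l' a b (lam G1 G2 : R) : (b <= a)%N -> (k' <= l')%N ->
  0 <= lam -> lam <= 1 -> 0 <= G1 -> G1 <= G2 ->
  (G1 ^+ (a - b) * Tp l' b G1) * Tp k' a (lam * G2) <=
  (G2 ^+ (a - b) * Tp l' b G2) * Tp k' a (lam * G1).
Proof.
move=> ba kl l0 l1 G10 G12.
have := @ratio_mono R a.+1 (nnc l' (a - b)) (fun j => 'C(k' + j, j)%:R * lam ^+ j) G1 G2 G10 G12.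
have eS : forall x, \sum_(j < a.+1) nnc l' (a - b) j * x ^+ j = x ^+ (a - b) * Tp l' b x.
  by move=> x; have := sum_shift l' (a - b) b x; rewrite subnK.
rewrite !eS.
have eT : forall x, \sum_(j < a.+1) 'C(k' + j, j)%:R * lam ^+ j * x ^+ j = Tp k' a (lam * x).
  by move=> x; apply: eq_bigr => j _; rewrite exprMn mulrA.
rewrite !eT; apply.
move=> i j ij ja.
have dj : 0 <= 'C(k' + i, i)%:R * lam ^+ i :> R by rewrite mulr_ge0 ?exprn_ge0.
case: (leqP (a - b) i) => ci; last first.
  by rewrite /nnc leqNgt ci mul0r mulr_ge0 ?nnc_ge0.
have cj : (a - b <= j)%N by apply: leq_trans ij.
have hb : ('C(l' + (i - (a - b)), i - (a - b)) * 'C(k' + j, j) <=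
          'C(l' + (j - (a - b)), j - (a - b)) * 'C(k' + i, i))%N.
  have [s [d [-> ->]]] : exists s d, i = (a - b + s)%N /\ j = (a - b + (s + d))%N.
    by exists (i - (a - b))%N, (j - i)%N; split; lia.
  rewrite !addKn; exact: bin_ratio.
rewrite /nnc ci cj.
have lij : lam ^+ j <= lam ^+ i by apply: ler_wiXn2l.
apply: (@le_trans _ _ ('C(l' + (i - (a - b)), i - (a - b))%:R * ('C(k' + j, j)%:R * lam ^+ i))).
  by apply: ler_wpM2l => //; apply: ler_wpM2l.
rewrite !mulrA; apply: ler_wpM2r; first exact: exprn_ge0.
by rewrite -!natrM ler_nat.
Qed.
End Alg5.
Section Alg6.
Variable R : realType.

Definition Rf k' a l' b (F G : R) := F ^+ a * Tp l' b G / (Tp k' a F * G ^+ b).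

Lemma Rf_ge0 k' a l' b (F G : R) : 0 <= F -> 0 <= G -> 0 <= Rf k' a l' b F G.
Proof.
move=> F0 G0; rewrite /Rf divr_ge0 // ?mulr_ge0 ?exprn_ge0 //; apply: ltW; exact: Tp_gt0.
Qed.

Lemma RfE k' a l' b (F G : R) :
  Rf k' a l' b F G = (F ^+ a / Tp k' a F) * (Tp l' b G / G ^+ b).
Proof. by rewrite /Rf mulf_div. Qed.

Lemma Rf_mono k' l' a b (F1 F2 G1 G2 : R) : (b <= a)%N -> (k' <= l')%N ->
  0 <= F1 -> F1 <= F2 -> 0 <= G1 -> G1 <= G2 ->
  (0 < F1 -> 0 < G1 -> F1 <= G1 /\ F1 * G2 <= F2 * G1) ->
  Rf k' a l' b F1 G1 <= Rf k' a l' b F2 G2.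
Proof.
move=> ba kl F10 F12 G10 G12 H.
have F20 : 0 <= F2 by apply: le_trans F12.
have G20 : 0 <= G2 by apply: le_trans G12.
case: (eqVneq F1 0) => [F1z|F1n0].
  case: a ba => [|a] ba.
    have -> : b = 0%N by apply/eqP; rewrite -leqn0.
    by rewrite /Rf !expr0 !Tp0.
  by rewrite /Rf F1z expr0n /= !mul0r Rf_ge0.
case: (eqVneq G1 0) => [G1z|G1n0].
  case: b ba => [|b] ba.
    rewrite !RfE !Tp0 !expr0 !divr1; apply: ler_wpM2r => //.
    exact: Fmono.
  by rewrite /Rf G1z expr0n /= !mulr0 invr0 mulr0 Rf_ge0.
have F1p : 0 < F1 by rewrite lt_neqAle eq_sym F1n0.
have G1p : 0 < G1 by rewrite lt_neqAle eq_sym G1n0.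
have G2p : 0 < G2 by apply: lt_le_trans G12.
have [FG hr] := H F1p G1p.
set lam := F1 / G1.
have l0 : 0 <= lam by rewrite divr_ge0 // ltW.
have l1 : lam <= 1 by rewrite ler_pdivrMr // mul1r.
have eF1 : F1 = lam * G1 by rewrite /lam divfK // gt_eqF.
have lG2 : lam * G2 <= F2.
  by rewrite /lam mulrAC ler_pdivrMr.
apply: (@le_trans _ _ (Rf k' a l' b (lam * G2) G2)); last first.
  rewrite !RfE; apply: ler_wpM2r.
    by rewrite divr_ge0 ?exprn_ge0 //; apply: ltW; exact: Tp_gt0.
  by apply: Fmono => //; rewrite mulr_ge0.
have eR : forall G, 0 < G -> Rf k' a l' b (lam * G) G =
    lam ^+ a * ((G ^+ (a - b) * Tp l' b G) / Tp k' a (lam * G)).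
  move=> G Gp; rewrite /Rf exprMn.
  have -> : G ^+ a = G ^+ (a - b) * G ^+ b by rewrite -exprD subnK.
  have Tn : Tp k' a (lam * G) != 0 by rewrite gt_eqF // Tp_gt0 // mulr_ge0 // ltW.
  have Gn : G ^+ b != 0 by rewrite expf_neq0 // gt_eqF.
  by field; rewrite Tn Gn.
rewrite {1}eF1 !eR //; apply: ler_wpM2l; first exact: exprn_ge0.
apply: div_le; try (apply: Tp_gt0; rewrite mulr_ge0 // ltW //).
exact: step1.
Qed.
End Alg6.
Lemma FleG (R : realType) (fX fY : R -> R) x :
  lifetime_density fX -> lifetime_density fY -> rhr_le fY fX ->
  0 < cdf fY x -> cdf fX x <= cdf fY x.
Proof.
move=> hX hY rhr Gp; rewrite leNgt; apply/negP => FG.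
have Fp : 0 < cdf fX x by apply: lt_trans FG.
have c1 : cdf fY x / cdf fX x < 1 by rewrite ltr_pdivrMr // mul1r.
have [n cn] := cdf_to1 hY c1.
set z := Order.max x n%:R.
have Gn : cdf fY n%:R <= cdf fY z by apply: cdf_mono => //; rewrite le_max lexx orbT.
have Gzp : 0 < cdf fY z by apply: lt_le_trans Gn; apply: le_lt_trans cn; rewrite divr_ge0 // ltW.
have xz : x <= z by rewrite /z le_max lexx.
have h := rhr x z xz.
have h2 : cdf fX z / cdf fY z <= 1 / cdf fY z.
  by rewrite ler_pdivrMr // divfK ?gt_eqF // cdf_le1.
have h3 := le_trans h h2.
move: h3; rewrite ler_pdivrMr // mulrAC ler_pdivlMr // mul1r => h3.
have : cdf fY z <= cdf fY x / cdf fX x by rewrite ler_pdivlMr // mulrC.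
by move=> /(lt_le_trans (lt_le_trans cn Gn)); rewrite ltxx.
Qed.

Lemma sys_hazardE (R : realType) (f : R -> R) k' a x :
  sys_hazard k'.+1 (k'.+1 + a) f x =
  hazard f (cdf f) x * (((k'.+1 + a) * 'C((k'.+1 + a).-1, k'))%:R * cdf f x ^+ a / Tp k' a (cdf f x)).
Proof.
rewrite /sys_hazard /hazard /sys_cdf /sys_density /= surv_id addKn.
set F := cdf f x; set A := ((k'.+1 + a) * 'C((k' + a), k'))%:R.
have e : (1 - F) ^+ k' * ((1 - F) ^+ k'.+1)^-1 = (1 - F)^-1.
  case: (eqVneq (1 - F) 0) => [->|q0].
    by rewrite !expr0n /= !invr0 mulr0.
  by rewrite exprS invfM mulrCA divff ?mulr1 // expf_neq0.
rewrite invfM.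
transitivity (A * F ^+ a * f x * (Tp k' a F)^-1 * ((1 - F) ^+ k' * ((1 - F) ^+ k'.+1)^-1)).
  by ring.
by rewrite e; ring.
Qed.
Theorem corollary3p1 (R : realType) (fX fY : R -> R) (k n l m : nat) :
  lifetime_density fX -> lifetime_density fY ->
  c_ord fX fY -> rhr_le fY fX ->
  (1 <= k <= n)%N -> (1 <= l <= m)%N -> (k <= l)%N -> (m - l <= n - k)%N ->
  c_ord_hazard (sys_hazard k n fX) (sys_hazard l m fY).
Proof.
move=> hX hY co rhr /andP[k1 kn] /andP[l1 lm] kl mlnk.
have [k' ek] : exists k', k = k'.+1 by exists k.-1; lia.
have [a en] : exists a, n = (k'.+1 + a)%N by exists (n - k)%N; lia.
have [l' el] : exists l', l = l'.+1 by exists l.-1; lia.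
have [b em] : exists b, m = (l'.+1 + b)%N by exists (m - l)%N; lia.
subst k n l m.
have ba : (b <= a)%N by move: mlnk; rewrite !addKn.
have kl' : (k' <= l')%N by [].
set A := ((k'.+1 + a) * 'C((k'.+1 + a).-1, k'))%:R : R.
set B := ((l'.+1 + b) * 'C((l'.+1 + b).-1, l'))%:R : R.
have key : forall z, sys_hazard k'.+1 (k'.+1 + a) fX z / sys_hazard l'.+1 (l'.+1 + b) fY z =
   (hazard fX (cdf fX) z / hazard fY (cdf fY) z) *
   ((A / B) * Rf k' a l' b (cdf fX z) (cdf fY z)).
  move=> z; rewrite !sys_hazardE -mulf_div; congr (_ * _).
  by rewrite /Rf invf_div !invfM /A /B; ring.
move=> x y x0 xy; rewrite !key.
have hz : forall (f : R -> R) (z : R), lifetime_density f -> 0 <= hazard f (cdf f) z.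
  move=> f z hf; rewrite /hazard; apply: divr_ge0; first exact: f0.
  by rewrite subr_ge0; exact: cdf_le1.
apply: ler_pM.
- by rewrite divr_ge0 ?hz.
- apply: mulr_ge0; first by rewrite divr_ge0.
  by apply: Rf_ge0; [exact: (cdf_ge0 hX x) | exact: (cdf_ge0 hY x)].
- exact: (co x y x0 xy).
apply: ler_wpM2l; first by rewrite divr_ge0.
apply: Rf_mono => //; [exact: (cdf_ge0 hX x) | exact: (cdf_mono hX xy) | exact: (cdf_ge0 hY x) | exact: (cdf_mono hY xy)|].
move=> Fp Gp; split; first exact: FleG.
have Gyp : 0 < cdf fY y by apply: lt_le_trans Gp (cdf_mono hY xy).
have := rhr x y xy.
rewrite ler_pdivrMr // mulrAC ler_pdivlMr //.

Qed.
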